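(* The Hilbert calculus ${\bf Tmd}$ is sound and complete with respect to the Nmatrix $\mathcal M_{\bf Tmd}$: for every $\Gamma\cup\{\alpha\}\subseteq For$, $\Gamma\vdash_{\bf Tmd}\alpha$ iff $\Gamma\vDash_{\mathcal M_{\bf Tmd}}\alpha$.
   Context: Formulas are built from a denumerable set of propositional variables by the unary connectives $\neg$, $\Box$ and the binary connective $\to$; $For$ is the set of all formulas. Abbreviations: $\Diamond\alpha:=\neg\Box\neg\alpha$, $\alpha\vee\beta:=\neg\alpha\to\beta$. ${\bf Tmd}$ is the Hilbert calculus whose axioms are all instances (over $For$) of the axiom schemas of a standard Hilbert calculus for classical propositional logic in the signature $\{\neg,\to\}$, plus all instances of: (K) $\Box(\alpha\to\beta)\to(\Box\alpha\to\Box\beta)$; (Kdet) $\Box(\alpha\to\beta)\to(\Diamond\alpha\to\Box\beta)$; (K2) $\Diamond(\alpha\to\beta)\to(\Box\alpha\to\Diamond\beta)$; (M1) $\neg\Diamond\alpha\to\Box(\alpha\to\beta)$; (M2) $\Box\beta\to\Box(\alpha\to\beta)$; (M3) $\Diamond\beta\to\Diamond(\alpha\to\beta)$; (M4) $\Diamond\neg\alpha\to\Diamond(\alpha\to\beta)$; (T) $\Box\alpha\to\alpha$; (DN1) $\Box\alpha\to\Box\neg\neg\alpha$; (DN2) $\Box\neg\neg\alpha\to\Box\alpha$; modus ponens is the only rule. Nmatrix semantics: an Nmatrix has a domain $A$, designated values $D\subseteq A$ and, for each connective, a multioperation giving nonempty subsets of $A$; a valuation is $v:For\to A$ with $v(\neg\alpha)\in\tilde\neg(v(\alpha))$,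 $v(\Box\alpha)\in\tilde\Box(v(\alpha))$, $v(\alpha\to\beta)\in v(\alpha)\tilde\to v(\beta)$; $\Gamma\vDash\alpha$ iff every valuation designating all of $\Gamma$ designates $\alpha$. $\mathcal M_{\bf Tmd}$: domain $\{T^+,C^+,C^-,F^-\}$, designated $\{T^+,C^+\}$; $\tilde\neg T^+=\{F^-\}$, $\tilde\neg C^+=\{C^-\}$, $\tilde\neg C^-=\{C^+\}$, $\tilde\neg F^-=\{T^+\}$; $\tilde\Box T^+=\{T^+,C^+\}$ and $\tilde\Box x=\{C^-,F^-\}$ for $x\neq T^+$; implication is deterministic: $x\tilde\to y=\{\max(n(x),y)\}$, where $n(T^+)=F^-$, $n(C^+)=C^-$, $n(C^-)=C^+$, $n(F^-)=T^+$ and the maximum is taken in the chain $F^-<C^-<C^+<T^+$. *)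

(* Defs.v *)
Inductive For : Type :=
| Var : nat -> For
| Neg : For -> For
| Box : For -> For
| Imp : For -> For -> For.

Definition Dia (a : For) : For := Neg (Box (Neg a)).
Definition Or (a b : For) : For := Imp (Neg a) b.

(* Axioms of Tmd. Classical propositional part: the standard
   Lukasiewicz/Mendelson Hilbert calculus over {neg, imp}. *)
Inductive TmdAxiom : For -> Prop :=
| Ax1 a b : TmdAxiom (Imp a (Imp b a))
| Ax2 a b c : TmdAxiom (Imp (Imp a (Imp b c)) (Imp (Imp a b) (Imp a c)))
| Ax3 a b : TmdAxiom (Imp (Imp (Neg b) (Neg a)) (Imp (Imp (Neg b) a) b))
| AxK a b : TmdAxiom (Imp (Box (Imp a b)) (Imp (Box a) (Box b)))
| AxKdet a b : TmdAxiom (Imp (Box (Imp a b)) (Imp (Dia a) (Box b)))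
| AxK2 a b : TmdAxiom (Imp (Dia (Imp a b)) (Imp (Box a) (Dia b)))
| AxM1 a b : TmdAxiom (Imp (Neg (Dia a)) (Box (Imp a b)))
| AxM2 a b : TmdAxiom (Imp (Box b) (Box (Imp a b)))
| AxM3 a b : TmdAxiom (Imp (Dia b) (Dia (Imp a b)))
| AxM4 a b : TmdAxiom (Imp (Dia (Neg a)) (Dia (Imp a b)))
| AxT a : TmdAxiom (Imp (Box a) a)
| AxDN1 a : TmdAxiom (Imp (Box a) (Box (Neg (Neg a))))
| AxDN2 a : TmdAxiom (Imp (Box (Neg (Neg a))) (Box a)).

Inductive Derivable (Gamma : For -> Prop) : For -> Prop :=
| D_hyp a : Gamma a -> Derivable Gamma a
| D_ax a : TmdAxiom a -> Derivable Gamma a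
| D_mp a b : Derivable Gamma (Imp a b) -> Derivable Gamma a -> Derivable Gamma b.

Inductive V4 : Type := Tp | Cp | Cm | Fm.   (* T+, C+, C-, F- *)

Definition designated (x : V4) : Prop := x = Tp \/ x = Cp.

(* multioperations, as predicates "y is in the output set" *)
Definition negM (x : V4) (y : V4) : Prop :=
  match x with
  | Tp => y = Fm
  | Cp => y = Cm
  | Cm => y = Cp
  | Fm => y = Tp
  end.

Definition boxM (x : V4) (y : V4) : Prop :=
  match x with
  | Tp => y = Tp \/ y = Cp
  | _ => y = Cm \/ y = Fm
  end.

Definition rank (x : V4) : nat :=
  match x with Fm => 0 | Cm => 1 | Cp => 2 | Tp => 3 end.

Definition nfun (x : V4) : V4 :=
  match x with Tp => Fm | Cp => Cm | Cm => Cp | Fm => Tp end.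

Definition maxV (x y : V4) : V4 := if Nat.leb (rank x) (rank y) then y else x.

Definition impM (x y : V4) (z : V4) : Prop := z = maxV (nfun x) y.

Definition valuation (v : For -> V4) : Prop :=
  forall a b : For,
    negM (v a) (v (Neg a)) /\ boxM (v a) (v (Box a)) /\ impM (v a) (v b) (v (Imp a b)).

Definition Entails (Gamma : For -> Prop) (a : For) : Prop :=
  forall v : For -> V4, valuation v ->
    (forall g, Gamma g -> designated (v g)) -> designated (v a).

(* Main.v *)
Require Import Defs.
From Stdlib Require Import Classical ClassicalEpsilon Arith Lia Cantor.

Lemma vneg v (Hv : valuation v) a : v (Neg a) = nfun (v a).
Proof. destruct (Hv a a) as [H _]. destruct (v a); simpl in *; auto. Qed.

Lemma vimp v (Hv : valuation v) a b : v (Imp a b) = maxV (nfun (v a)) (v b).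
Proof. destruct (Hv a b) as [_ [_ H]]. exact H. Qed.

Lemma vbox v (Hv : valuation v) a : boxM (v a) (v (Box a)).
Proof. destruct (Hv a a) as [_ [H _]]. exact H. Qed.

Ltac gen_boxes v Hv :=
  repeat match goal with
  | |- context [v (Box ?t)] =>
      let H := fresh "HB" in
      pose proof (vbox v Hv t) as H;
      repeat first [rewrite (vimp v Hv) in H | rewrite (vneg v Hv) in H];
      revert H; generalize (v (Box t))
  end.

Lemma ax_sound v (Hv : valuation v) a : TmdAxiom a -> designated (v a).
Proof.
  intros Hax; destruct Hax; unfold Dia in *;
  repeat first [rewrite (vimp v Hv) | rewrite (vneg v Hv)]; gen_boxes v Hv;
  repeat match goal with |- context [v ?t] => generalize (v t) end;
  intros;
  repeat match goal with x : V4 |- _ => destruct x end;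
  repeat match goal with
         | H : boxM _ _ |- _ => simpl in H; destruct H as [H|H]; try discriminate H
         end;
  unfold designated, maxV, nfun, rank; simpl; auto.
Qed.

Lemma soundness G a : Derivable G a -> Entails G a.
Proof.
  intros D v Hv HG. induction D.
  - auto.
  - apply ax_sound; auto.
  - rewrite (vimp v Hv) in IHD1.
    destruct (v a), (v b); unfold designated in *; simpl in *; intuition discriminate.
Qed.

Definition Ext (G : For -> Prop) (a : For) : For -> Prop := fun x => G x \/ x = a.

Lemma mono (G D : For -> Prop) a : (forall x, G x -> D x) -> Derivable G a -> Derivable D a.
Proof. intros H Dr; induction Dr; [apply D_hyp; auto | apply D_ax; auto | eapply D_mp; eauto]. Qed.

Lemma mp G a b : Derivable G (Imp a b) -> Derivable G a -> Derivable G b.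
Proof. apply D_mp. Qed.

Lemma ax G a : TmdAxiom a -> Derivable G a.
Proof. apply D_ax. Qed.

Lemma dimp_id G a : Derivable G (Imp a a).
Proof.
  eapply mp; [eapply mp; [apply ax, (Ax2 a (Imp a a) a) | apply ax, Ax1] | apply ax, (Ax1 a a)].
Qed.

Lemma deduction G a b : Derivable (Ext G a) b -> Derivable G (Imp a b).
Proof.
  intros D; induction D.
  - destruct H as [H | ->].
    + eapply mp; [apply ax, Ax1 | apply D_hyp; auto].
    + apply dimp_id.
  - eapply mp; [apply ax, Ax1 | apply ax; auto].
  - eapply mp; [eapply mp; [apply ax, Ax2 | exact IHD1] | exact IHD2].
Qed.

Lemma hyp G a : Derivable (Ext G a) a.
Proof. apply D_hyp; right; auto. Qed.

Lemma weak G a b : Derivable G b -> Derivable (Ext G a) b.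
Proof. apply mono; intros; left; auto. Qed.

Lemma thm_d G A B : Derivable G (Imp (Neg A) (Imp A B)).
Proof.
  apply deduction, deduction.
  eapply mp; [eapply mp; [apply ax, (Ax3 A B) |] |].
  - eapply mp; [apply ax, Ax1 | apply weak, hyp].
  - eapply mp; [apply ax, Ax1 | apply hyp].
Qed.

Lemma thm_b G B : Derivable G (Imp (Neg (Neg B)) B).
Proof.
  apply deduction.
  eapply mp; [eapply mp; [apply ax, (Ax3 (Neg B) B) |] |].
  - eapply mp; [apply ax, Ax1 | apply hyp].
  - apply dimp_id.
Qed.

Lemma thm_e G A B : Derivable G (Imp (Imp (Neg B) (Neg A)) (Imp A B)).
Proof.
  apply deduction, deduction.
  eapply mp; [eapply mp; [apply ax, (Ax3 A B) | apply weak, hyp] |].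
  eapply mp; [apply ax, Ax1 | apply hyp].
Qed.

Lemma thm_c G B : Derivable G (Imp B (Neg (Neg B))).
Proof.
  apply deduction.
  eapply mp; [eapply mp; [apply ax, (Ax3 B (Neg (Neg B))) | apply thm_b] |].
  eapply mp; [apply ax, Ax1 | apply hyp].
Qed.

Lemma thm_f G A B : Derivable G (Imp (Imp A B) (Imp (Neg B) (Neg A))).
Proof.
  apply deduction.
  eapply mp; [apply thm_e |].
  apply deduction.
  eapply mp; [apply thm_c |].
  eapply mp; [apply weak, hyp |].
  eapply mp; [apply thm_b | apply hyp].
Qed.

Lemma cases G A C : Derivable G (Imp A C) -> Derivable G (Imp (Neg A) C) -> Derivable G C.
Proof.
  intros H1 H2.
  eapply mp; [eapply mp; [apply ax, (Ax3 (Neg A) C) |] |].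
  - eapply mp; [apply thm_f | exact H2].
  - eapply mp; [apply thm_f | exact H1].
Qed.

Fixpoint enc (a : For) : nat :=
  match a with
  | Var n => to_nat (0, n)
  | Neg a => to_nat (1, enc a)
  | Box a => to_nat (2, enc a)
  | Imp a b => to_nat (3, to_nat (enc a, enc b))
  end.

Fixpoint dec (f : nat) (n : nat) : For :=
  match f with
  | 0 => Var 0
  | S f =>
    match of_nat n with
    | (0, m) => Var m
    | (1, m) => Neg (dec f m)
    | (2, m) => Box (dec f m)
    | (_, m) => let (p, q) := of_nat m in Imp (dec f p) (dec f q)
    end
  end.

Fixpoint depth (a : For) : nat :=
  match a with
  | Var _ => 1
  | Neg a | Box a => S (depth a)
  | Imp a b => S (Nat.max (depth a) (depth b))
  end.

Lemma dec_S f n : dec (S f) n =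
    match of_nat n with
    | (0, m) => Var m
    | (1, m) => Neg (dec f m)
    | (2, m) => Box (dec f m)
    | (_, m) => let (p, q) := of_nat m in Imp (dec f p) (dec f q)
    end.
Proof. reflexivity. Qed.

Lemma dec_enc a : forall f, depth a <= f -> dec f (enc a) = a.
Proof.
  induction a; intros f Hf; destruct f as [|f]; simpl depth in Hf; try lia;
    rewrite dec_S.
  - change (enc (Var n)) with (to_nat (0, n)); rewrite cancel_of_to; reflexivity.
  - change (enc (Neg a)) with (to_nat (1, enc a)); rewrite cancel_of_to, IHa; auto; lia.
  - change (enc (Box a)) with (to_nat (2, enc a)); rewrite cancel_of_to, IHa; auto; lia.
  - change (enc (Imp a1 a2)) with (to_nat (3, to_nat (enc a1, enc a2))).
    rewrite !cancel_of_to, IHa1, IHa2; auto; lia.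
Qed.

Definition enum (k : nat) : For := let (f, n) := of_nat k in dec f n.

Lemma enum_surj a : exists k, enum k = a.
Proof.
  exists (to_nat (depth a, enc a)). unfold enum. rewrite cancel_of_to.
  apply dec_enc; auto.
Qed.

Section Lind.
Variable G : For -> Prop.
Variable al : For.
Hypothesis Hnot : ~ Derivable G al.

Fixpoint chain (n : nat) : For -> Prop :=
  match n with
  | 0 => G
  | S n => if excluded_middle_informative (Derivable (Ext (chain n) (enum n)) al)
           then chain n else Ext (chain n) (enum n)
  end.

Definition Delta : For -> Prop := fun x => exists n, chain n x.

Lemma chain_step n x : chain n x -> chain (S n) x.
Proof. intros H; simpl; destruct (excluded_middle_informative _); [auto | left; auto]. Qed.

Lemma chain_mono n m x : n <= m -> chain n x -> chain m x.
Proof. induction 1; auto using chain_step. Qed.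

Lemma chain_cons n : ~ Derivable (chain n) al.
Proof.
  induction n; simpl; auto.
  destruct (excluded_middle_informative _); auto.
Qed.

Lemma compact a : Derivable Delta a -> exists n, Derivable (chain n) a.
Proof.
  induction 1.
  - destruct H as [n Hn]. exists n; apply D_hyp; auto.
  - exists 0; apply D_ax; auto.
  - destruct IHDerivable1 as [n1 H1], IHDerivable2 as [n2 H2].
    exists (Nat.max n1 n2). eapply D_mp.
    + eapply mono; [| exact H1]. intros; eapply chain_mono; [| eauto]; lia.
    + eapply mono; [| exact H2]. intros; eapply chain_mono; [| eauto]; lia.
Qed.

Lemma Delta_cons : ~ Derivable Delta al.
Proof. intros H; destruct (compact _ H) as [n Hn]; exact (chain_cons n Hn). Qed.

Lemma G_Delta x : G x -> Delta x.
Proof. intros; exists 0; auto. Qed.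

Lemma Delta_max a : Delta a \/ Derivable Delta (Imp a al).
Proof.
  destruct (enum_surj a) as [k <-].
  destruct (excluded_middle_informative (Derivable (Ext (chain k) (enum k)) al)) as [d | n].
  - right. apply deduction. eapply mono; [| exact d].
    intros x [Hx | ->]; [left; exists k; auto | right; auto].
  - left. exists (S k). simpl. destruct (excluded_middle_informative _); [contradiction | right; auto].
Qed.

Lemma Delta_closed a : Derivable Delta a -> Delta a.
Proof.
  intros H. destruct (Delta_max a) as [? | H2]; auto.
  exfalso; apply Delta_cons; eapply mp; eauto.
Qed.

Lemma Dmp a b : Delta (Imp a b) -> Delta a -> Delta b.
Proof. intros; apply Delta_closed; eapply mp; apply D_hyp; eauto. Qed.

Lemma Dax a : TmdAxiom a -> Delta a.
Proof. intros; apply Delta_closed, ax; auto. Qed.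

Lemma Dnot : ~ Delta al.
Proof. intros H; apply Delta_cons, D_hyp; auto. Qed.

Lemma Dneg a : Delta (Neg a) <-> ~ Delta a.
Proof.
  split.
  - intros H1 H2. apply Dnot. apply Delta_closed.
    eapply mp; [eapply mp; [apply thm_d | apply D_hyp; exact H1] | apply D_hyp; exact H2].
  - intros H. destruct (Delta_max a) as [? | H1]; [contradiction |].
    destruct (Delta_max (Neg a)) as [? | H2]; auto.
    exfalso; apply Delta_cons; exact (cases _ a al H1 H2).
Qed.

Lemma Dimp a b : Delta (Imp a b) <-> (~ Delta a \/ Delta b).
Proof.
  split.
  - intros H. destruct (classic (Delta a)); [right; eapply Dmp; eauto | left; auto].
  - intros [H | H].
    + apply Delta_closed. eapply mp; [apply thm_d | apply D_hyp, Dneg; auto].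
    + eapply Dmp; [apply Dax, Ax1 | auto].
Qed.

Lemma Ddia a : Delta (Dia a) <-> ~ Delta (Box (Neg a)).
Proof. unfold Dia; apply Dneg. Qed.

Definition val (a : For) : V4 :=
  if excluded_middle_informative (Delta (Box a)) then Tp
  else if excluded_middle_informative (Delta (Box (Neg a))) then Fm
  else if excluded_middle_informative (Delta a) then Cp else Cm.

Lemma DT a : Delta (Box a) -> Delta a.
Proof. intros; eapply Dmp; [apply Dax, AxT | auto]. Qed.

Lemma valTp a : val a = Tp <-> Delta (Box a).
Proof.
  unfold val; repeat destruct (excluded_middle_informative _); split; intros; auto;
    try discriminate; contradiction.
Qed.

Lemma valFm a : val a = Fm <-> Delta (Box (Neg a)).
Proof.
  unfold val; repeat destruct (excluded_middle_informative _); split; intros; auto;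
    try discriminate; try contradiction.
  exfalso; apply DT in d; apply DT, Dneg in H; contradiction.
Qed.

Lemma valD a : designated (val a) <-> Delta a.
Proof.
  unfold val, designated; repeat destruct (excluded_middle_informative _); split; intros; auto;
    try (destruct H; discriminate); try contradiction.
  - apply DT; auto.
  - apply DT, Dneg in d; contradiction.
Qed.

Lemma v4_ext x y : (x = Tp <-> y = Tp) -> (x = Fm <-> y = Fm) ->
  (designated x <-> designated y) -> x = y.
Proof.
  unfold designated; destruct x, y; intuition discriminate.
Qed.

Lemma nfun_props x : (nfun x = Tp <-> x = Fm) /\ (nfun x = Fm <-> x = Tp) /\
  (designated (nfun x) <-> ~ designated x).
Proof. unfold designated; destruct x; simpl; intuition discriminate. Qed.

Lemma max_props x y : (maxV (nfun x) y = Tp <-> x = Fm \/ y = Tp) /\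
  (maxV (nfun x) y = Fm <-> x = Tp /\ y = Fm) /\
  (designated (maxV (nfun x) y) <-> ~ designated x \/ designated y).
Proof. unfold designated; destruct x, y; simpl; intuition discriminate. Qed.

Lemma boxM_iff x y : boxM x y <-> (x = Tp <-> designated y).
Proof. unfold designated; destruct x, y; simpl; intuition discriminate. Qed.

Lemma val_valuation : valuation val.
Proof.
  intros a b. split; [| split].
  - unfold negM. assert (E : val (Neg a) = nfun (val a)).
    { destruct (nfun_props (val a)) as [P1 [P2 P3]].
      apply v4_ext.
      + rewrite P1, valTp, valFm; tauto.
      + rewrite P2, valFm, valTp. split; intros H.
        * eapply Dmp; [apply Dax, AxDN2 | auto].
        * eapply Dmp; [apply Dax, AxDN1 | auto].
      + rewrite P3, !valD, Dneg; tauto. }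
    rewrite E; destruct (val a); reflexivity.
  - apply boxM_iff. rewrite valTp, valD; tauto.
  - unfold impM. destruct (max_props (val a) (val b)) as [P1 [P2 P3]].
    apply v4_ext.
    + rewrite P1, !valTp, valFm. split.
      * intros H. destruct (classic (Delta (Box (Neg a)))) as [|Hn]; [left; auto | right].
        apply Ddia in Hn. eapply Dmp; [eapply Dmp; [apply Dax, AxKdet | eauto] | auto].
      * intros [H | H].
        -- eapply Dmp; [apply Dax, (AxM1 a b) |]. apply Dneg. rewrite Ddia. tauto.
        -- eapply Dmp; [apply Dax, AxM2 | auto].
    + rewrite P2, valTp, !valFm. split.
      * intros H. split.
        -- apply NNPP; intros Hn.
           assert (H1 : Delta (Dia (Neg a))).
           { apply Ddia. intros H2. apply Hn. eapply Dmp; [apply Dax, AxDN2 | auto]. }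
           assert (H3 : Delta (Dia (Imp a b))) by (eapply Dmp; [apply Dax, AxM4 | eauto]).
           apply Ddia in H3; contradiction.
        -- apply NNPP; intros Hn. apply Ddia in Hn.
           assert (H3 : Delta (Dia (Imp a b))) by (eapply Dmp; [apply Dax, AxM3 | eauto]).
           apply Ddia in H3; contradiction.
      * intros [H1 H2]. apply NNPP; intros Hn. apply Ddia in Hn.
        assert (H3 : Delta (Dia b)) by (eapply Dmp; [eapply Dmp; [apply Dax, AxK2 | eauto] | auto]).
        apply Ddia in H3; contradiction.
    + rewrite P3, !valD, Dimp; tauto.
Qed.

End Lind.

Theorem mainTheorem6 : forall (Gamma : For -> Prop) (a : For),
  Derivable Gamma a <-> Entails Gamma a.
Proof.
  intros G a; split; [apply soundness |].
  intros HE. apply NNPP; intros Hn.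
  pose proof (HE (val G a) (val_valuation G a Hn)) as H.
  apply (Dnot G a Hn). apply (valD G a Hn). apply H.
  intros g Hg. apply valD; auto. apply G_Delta; auto.
Qed.
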